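(* Let $M$ be a sharp, integral monoid and $\Gamma=(X,r,i,l)$ an $M$-metrised graph. Then $\operatorname{dgon}(\Gamma)\le\operatorname{ggon}(\Gamma)$.
   Context: Monoids are commutative, sharp (only unit $0$), integral (cancellative), with groupification $M^{gp}$; $\langle m\rangle=\{km:k\in\mathbb Z\}\subseteq M^{gp}$ and for $x=km$, $m\ne0$, $x/m:=k$. A graph is $(X,r,i)$, $X$ finite, $r$ idempotent, $i$ an involution, $i(x)=x\iff r(x)=x$; vertices $V$ = fixed points, half-edges $H=X\setminus V$, edges $\{e,i(e)\}$ joining $r(e),r(i(e))$, $H_v=\{e\in H:r(e)=v\}$; graphs are connected; a tree is a graph without cycles. An $M$-metrised graph adds $l:X\to M$ with $l(i(x))=l(x)$, $l(x)=0\iff x\in V$. Divisors: elements of the free abelian group on $V$, partially ordered pointwise; $\operatorname{Div}^k_+$ = effective divisors of degree $k$. $\operatorname{PL}(\Gamma)=\{g:V\to M^{gp}: g(r(e))-g(r(i(e)))\in\langle l(e)\rangle\ \forall e\in H\}$; $\Delta(g)=\sum_{v}\big(\sum_{e\in H_v}\frac{g(v)-g(r(i(e)))}{l(e)}\big)[v]$; $D\sim D'$ iff $D-D'\in\Delta(\operatorname{PL}(\Gamma))$; $|D|=\{E\ge0:E\sim D\}$; $r(D)=\max\{k\in\mathbb Z:|D-F|\ne\emptyset\ \forall F\in\operatorname{Div}^k_+(\Gamma)\}$; $\operatorname{dgon}(\Gamma)=\min\{\deg D: r(D)\ge1\}$. A morphism $\phi:\Gamma\to\Gamma'$ is a map $X\to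 X'$ with $\phi(V)\subseteq V'$; if $\phi(e)=e'\in H'$ then $\phi(r(e))=r'(e')$, $\phi(r(i(e)))=r'(i'(e'))$, $l'(e')\in\langle l(e)\rangle$; if $\phi(e)=v'\in V'$ then $\phi(r(e))=\phi(r(i(e)))=v'$. Slope $\mu_\phi(e)=l'(\phi(e))/l(e)$ if $\phi(e)\in H'$, else $0$; $m_{\phi,v}(e')=\sum_{e\in H_v,\phi(e)=e'}\mu_\phi(e)$ for $e'\in H'_{\phi(v)}$; harmonic: independent of $e'$ for each $v$, common value $m_\phi(v)$; non-degenerate: $m_\phi(v)>0$ for all $v$; degree of harmonic $\phi$: $\sum_{v:\phi(v)=r'(e')}m_{\phi,v}(e')$ for any $e'\in H'$ (independent of $e'$). $\operatorname{ggon}(\Gamma)$ = minimum of $\deg\phi$ over $M$-metrised trees $T$ and harmonic non-degenerate morphisms $\phi:\Gamma\to T$, or $\infty$ if none exists. *)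

(* Defs.v *)
From HB Require Import structures.
From mathcomp Require Import all_boot all_order all_algebra.

Unset Printing Implicit Defensive.
Import Order.TTheory GRing.Theory Num.Theory.
Local Open Scope ring_scope.

(* Monoids.  A commutative monoid is an [nmodType] (written additively). *)

Definition sharp_monoid (M : nmodType) : Prop :=
  forall a b : M, a + b = 0 -> a = 0.

Definition integral_monoid (M : nmodType) : Prop :=
  forall a b c : M, a + b = a + c -> b = c.

(* (G, iota) is the groupification M^gp of the (integral) monoid M:
   iota is a monoid morphism, injective, and every element of G is a
   difference iota a - iota b (the standard construction of M^gp for an
   integral monoid, up to isomorphism). *)
Definition groupification (M : nmodType) (G : zmodType) (iota : M -> G) : Prop :=
  [/\ iota 0 = 0,
      (forall a b : M, iota (a + b) = iota a + iota b),
      injective iota &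
      forall x : G, exists a b : M, x = iota a - iota b].

(* x \in <m> with x / m = k, i.e. x = k m in M^gp *)
Definition gp_quot (G : zmodType) (x m : G) (k : int) : Prop := x = m *~ k.
Arguments gp_quot {G}.
Arguments groupification {M G}.

Record mgraph (M : nmodType) := MGraph {
  gX : finType;
  gr : gX -> gX;
  gi : gX -> gX;
  gl : gX -> M }.
Arguments MGraph {M}.
Arguments gX {M}.
Arguments gr {M}.
Arguments gi {M}.
Arguments gl {M}.

Set Implicit Arguments.
Unset Strict Implicit.
Section Graph.
Variables (M : nmodType) (Gam : mgraph M).
Local Notation X := (gX Gam).
Local Notation r := (gr Gam).
Local Notation i := (gi Gam).
Local Notation l := (gl Gam).

Definition is_vertex (x : X) : bool := r x == x.
Definition is_half_edge (x : X) : bool := r x != x.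

Definition graph_axioms : Prop :=
  [/\ (forall x, r (r x) = r x),
      (forall x, i (i x) = x) &
      (forall x, i x = x <-> r x = x)].

Definition incid : rel X := fun x y => [|| y == r x, x == r y | y == i x].

Definition graph_connected : Prop :=
  (exists x, is_vertex x) /\ forall x y : X, connect incid x y.

Definition metrised : Prop :=
  (forall x, l (i x) = l x) /\ (forall x, l x = 0 <-> is_vertex x).

Definition is_mgraph : Prop := [/\ graph_axioms, graph_connected & metrised].

Definition graph_cycle (s : seq X) : bool :=
  [&& (0 < size s)%N, all is_half_edge s, uniq (map r s), uniq (s ++ map i s)
    & cycle (fun a b => r (i a) == r b) s].

Definition is_mtree : Prop := is_mgraph /\ forall s, ~~ graph_cycle s.

Definition vtx := {x : X | is_vertex x}.
Definition divisor := vtx -> int.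
Definition deg (D : divisor) : int := \sum_(v : vtx) D v.
Definition effective (D : divisor) : Prop := forall v, 0 <= D v.
Definition div_sub (D D' : divisor) : divisor := fun v => D v - D' v.

Variables (G : zmodType) (iota : M -> G).

(* g : V -> M^gp (given on all of X, only values at vertices matter) is
   piecewise linear with Laplacian Delta(g) = D:  k e = (g(r e) - g(r(i e)))/l(e) *)
Definition in_PL (g : X -> G) : Prop :=
  forall e, is_half_edge e -> exists k, gp_quot (g (r e) - g (r (i e))) (iota (l e)) k.

Definition is_Delta (g : X -> G) (D : divisor) : Prop :=
  exists k : X -> int,
    (forall e, is_half_edge e -> gp_quot (g (r e) - g (r (i e))) (iota (l e)) (k e)) /\
    forall v : vtx, D v = \sum_(e : X | is_half_edge e && (r e == val v)) k e.

Definition lin_equiv (D D' : divisor) : Prop :=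
  exists g : X -> G, in_PL g /\ is_Delta g (div_sub D D').

Definition linsys_nonempty (D : divisor) : Prop :=
  exists E, effective E /\ lin_equiv E D.

Definition rank_cond (D : divisor) (k : int) : Prop :=
  forall F : divisor, effective F -> deg F = k -> linsys_nonempty (div_sub D F).

Definition is_rank (D : divisor) (n : int) : Prop :=
  rank_cond D n /\ forall k, rank_cond D k -> k <= n.

Definition dgon_le (n : int) : Prop :=
  exists D : divisor, (exists rk, is_rank D rk /\ 1 <= rk) /\ deg D <= n.

End Graph.

Section Morphism.
Variables (M : nmodType) (G : zmodType) (iota : M -> G) (Gam T : mgraph M).
Local Notation X := (gX Gam).
Local Notation r := (gr Gam).
Local Notation i := (gi Gam).
Local Notation l := (gl Gam).
Local Notation X' := (gX T).
Local Notation r' := (gr T).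
Local Notation i' := (gi T).
Local Notation l' := (gl T).

Definition is_morphism (phi : X -> X') : Prop :=
  (forall v, is_vertex v -> is_vertex (phi v)) /\
  forall e : X,
    (is_half_edge (phi e) ->
       [/\ phi (r e) = r' (phi e), phi (r (i e)) = r' (i' (phi e))
         & exists k, gp_quot (iota (l' (phi e))) (iota (l e)) k]) /\
    (is_vertex (phi e) -> phi (r e) = phi e /\ phi (r (i e)) = phi e).

Definition is_slope (phi : X -> X') (mu : X -> int) : Prop :=
  forall e, is_half_edge e ->
    (is_half_edge (phi e) -> gp_quot (iota (l' (phi e))) (iota (l e)) (mu e)) /\
    (is_vertex (phi e) -> mu e = 0).

Definition mult_at (phi : X -> X') (mu : X -> int) (v : X) (e' : X') : int :=
  \sum_(e : X | is_half_edge e && (r e == v) && (phi e == e')) mu e.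

Definition harmonic (phi : X -> X') (mu : X -> int) (m : X -> int) : Prop :=
  forall v, is_vertex v -> forall e' : X', is_half_edge e' -> r' e' = phi v ->
    mult_at phi mu v e' = m v.

Definition nondegen_mult (m : X -> int) : Prop :=
  forall v : X, is_vertex v -> 0 < m v.

(* deg phi = n (computed at any half-edge e' of T; requires T to have one) *)
Definition has_degree (phi : X -> X') (mu : X -> int) (n : int) : Prop :=
  (exists e' : X', is_half_edge e') /\
  forall e' : X', is_half_edge e' ->
    \sum_(v : X | is_vertex v && (phi v == r' e')) mult_at phi mu v e' = n.

End Morphism.

(* Main.v *)
Require Import Defs.
From HB Require Import structures.
From mathcomp Require Import all_boot all_order all_algebra.
From mathcomp Require Import zify.
From Stdlib Require Import Classical.
Import Order.TTheory GRing.Theory Num.Theory.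
Local Open Scope ring_scope.
Set Implicit Arguments. Unset Strict Implicit.

Section Gen.
Variables (M : nmodType) (Gam : mgraph M) (G : zmodType) (iota : M -> G).
Local Notation X := (gX Gam).
Local Notation r := (gr Gam).
Local Notation i := (gi Gam).
Local Notation l := (gl Gam).

Lemma sum_vtx (F : X -> int) :
  \sum_(w : vtx Gam) F (val w) = \sum_(x | is_vertex x) F x.
Proof.
rewrite (reindex_omap (val : vtx Gam -> X) insub); last first.
  by move=> x Px; rewrite insubT.
by apply: eq_bigl=> -[x xA]/=; rewrite insubT ?xA /= eqxx.
Qed.

Hypothesis Hax : graph_axioms Gam.

Lemma rr x : r (r x) = r x. Proof. by case: Hax. Qed.
Lemma ii x : i (i x) = x. Proof. by case: Hax. Qed.
Lemma vert_r x : is_vertex (r x). Proof. by rewrite /is_vertex rr. Qed.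
Definition rv (x : X) : vtx Gam := exist _ (r x) (vert_r x).

Lemma half_i e : is_half_edge e -> is_half_edge (i e).
Proof.
case: Hax => _ _ H3; rewrite /is_half_edge => /eqP he; apply/eqP => hie.
apply: he; apply/H3. have := proj2 (H3 (i e)) hie; rewrite ii => h; by rewrite -h.
Qed.

Lemma half_ne_i e : is_half_edge e -> i e != e.
Proof. case: Hax => _ _ H3; rewrite /is_half_edge => /eqP he; apply/eqP => h; by apply/he/H3. Qed.

Lemma vert_i e : is_vertex e -> i e = e.
Proof. case: Hax => _ _ H3; rewrite /is_vertex => /eqP he; by apply/H3. Qed.

Lemma sum_by_vtx (k : X -> int) :
  \sum_(v : vtx Gam) \sum_(e : X | is_half_edge e && (r e == val v)) k e =
  \sum_(e | is_half_edge e) k e.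
Proof.
rewrite (partition_big rv xpredT) //=.

Qed.

Hypothesis Hmet : metrised Gam.
Hypothesis HMsharp : sharp_monoid M.
Hypothesis Hgp : groupification iota.

Lemma iota_mulrn x j : iota (x *+ j) = iota x *+ j.
Proof.
case: Hgp => H0 HD _ _; elim: j => [|j IH]; first by rewrite !mulr0n.
by rewrite !mulrS HD IH.
Qed.

Lemma quot_uniq e a b : is_half_edge e ->
  iota (l e) *~ a = iota (l e) *~ b -> a = b.
Proof.
move=> he hab; apply/eqP; rewrite -subr_eq0; apply/eqP.
have h0 : iota (l e) *~ (a - b) = 0 by rewrite mulrzBr hab subrr.
move: h0; case: (a - b) => j.
- case: j => [//|j] /= h; exfalso.
  have : iota (l e *+ j.+1) = iota 0 by rewrite iota_mulrn; case: Hgp => -> _ _ _; exact: h.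
  case: Hgp => _ _ Hinj _ /Hinj; rewrite mulrS => /HMsharp hl.
  by case: Hmet => _ /(_ e) [/(_ hl) hv _]; move: he hv; rewrite /is_half_edge /is_vertex => /negPf ->.
- rewrite NegzE mulrNz => /eqP; rewrite oppr_eq0 => /eqP h; exfalso.
  have : iota (l e *+ j.+1) = iota 0 by rewrite iota_mulrn; case: Hgp => -> _ _ _; exact: h.
  case: Hgp => _ _ Hinj _ /Hinj; rewrite mulrS => /HMsharp hl.
  by case: Hmet => _ /(_ e) [/(_ hl) hv _]; move: he hv; rewrite /is_half_edge /is_vertex => /negPf ->.
Qed.

Lemma deg_Delta (g : X -> G) (D : divisor Gam) : is_Delta iota g D -> deg D = 0.
Proof.
case=> k [Hk HD].
rewrite /deg (eq_bigr _ (fun v _ => HD v)) sum_by_vtx.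
set S := \sum_(e | _) _.
have HS : S = - S.
  rewrite {2}/S (reindex_inj (can_inj ii)) /= -sumrN.
  apply: eq_big => [e|e he].
    by apply/idP/idP => h; [exact: half_i | have := half_i h; rewrite ii].
  apply: (@quot_uniq e); first by [].
  have Hl : l (i e) = l e by case: Hmet.
  by rewrite mulrNz -Hk // -Hl -Hk ?half_i // ii opprB.
apply/eqP; rewrite -[S]/(S) ; move: HS; lia.
Qed.

End Gen.

Section Lin.
Variables (M : nmodType) (Gam : mgraph M) (G : zmodType) (iota : M -> G).
Local Notation X := (gX Gam).
Local Notation r := (gr Gam).
Local Notation i := (gi Gam).
Local Notation l := (gl Gam).

Lemma Delta_PL (g : X -> G) D : is_Delta iota g D -> in_PL iota g.
Proof. by case=> k [Hk _] e he; exists (k e); apply: Hk. Qed.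

Lemma lin_equiv_ext (D1 D2 D1' D2' : divisor Gam) :
  (forall v, D1 v - D2 v = D1' v - D2' v) ->
  lin_equiv iota D1 D2 -> lin_equiv iota D1' D2'.
Proof.
move=> Hv [g [Hpl [k [Hk HD]]]]; exists g; split => //; exists k; split => //.
by move=> v; rewrite /div_sub -Hv; apply: HD.
Qed.

Lemma lin_equiv_refl (D : divisor Gam) : lin_equiv iota D D.
Proof.
exists (fun _ => 0); split.
  by move=> e _; exists 0; rewrite /gp_quot subr0 mulr0z.
exists (fun _ => 0); split.
  by move=> e _; rewrite /gp_quot subr0 mulr0z.
by move=> v; rewrite /div_sub subrr big1.
Qed.

Lemma lin_equiv_trans (D1 D2 D3 : divisor Gam) :
  lin_equiv iota D1 D2 -> lin_equiv iota D2 D3 -> lin_equiv iota D1 D3.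
Proof.
move=> [g1 [_ [k1 [Hk1 HD1]]]] [g2 [_ [k2 [Hk2 HD2]]]].
have HD : is_Delta iota (fun x => g1 x + g2 x) (div_sub D1 D3).
  exists (fun e => k1 e + k2 e); split.
    move=> e he; rewrite /gp_quot mulrzDr -Hk1 // -Hk2 //.
    by rewrite opprD addrACA.
  move=> v; rewrite big_split /= -HD1 -HD2 /div_sub.
  by rewrite addrA subrK.
by exists (fun x => g1 x + g2 x); split => //; apply: Delta_PL HD.
Qed.
End Lin.

Section Pull.
Variables (M : nmodType) (G : zmodType) (iota : M -> G) (Gam T : mgraph M).
Variables (phi : gX Gam -> gX T) (mu m : gX Gam -> int).
Hypothesis Hphi : is_morphism iota phi.
Hypothesis Hmu : is_slope iota phi mu.
Hypothesis Hharm : harmonic phi mu m.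
Local Notation X := (gX Gam).
Local Notation r := (gr Gam).
Local Notation i := (gi Gam).
Local Notation l := (gl Gam).
Local Notation r' := (gr T).
Local Notation i' := (gi T).
Local Notation l' := (gl T).

Definition phiv (w : vtx Gam) : vtx T := exist _ (phi (val w)) (proj1 Hphi _ (valP w)).

Lemma mult_atE (v : X) e' : is_vertex v ->
  mult_at phi mu v e' = if is_half_edge e' && (r' e' == phi v) then m v else 0.
Proof.
move=> hv; case: ifP => [/andP [he /eqP hr]| hn]; first exact: Hharm.
apply: big1 => e /andP [/andP [he /eqP rv] /eqP pe].
case: (boolP (is_half_edge e')) hn => he' /= hn.
  have [H1 _ _] := (proj1 (proj2 Hphi e)) (etrans (f_equal _ pe) he' : is_half_edge (phi e)).
  by move: hn; rewrite -rv H1 pe eqxx.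
have hpv : is_vertex (phi e) by rewrite pe /is_vertex -(negbK (_ == _)).
exact: (proj2 (Hmu he) hpv).
Qed.

Lemma pullback (f : gX T -> G) (DT : divisor T) :
  is_Delta iota f DT ->
  is_Delta iota (fun x => f (phi x)) (fun w => m (val w) * DT (phiv w)).
Proof.
case=> k' [Hk' HDT]; exists (fun e => mu e * k' (phi e)); split.
  move=> e he; rewrite /gp_quot.
  case: (boolP (is_half_edge (phi e))) => hpe.
    have [H1 H2 _] := (proj1 (proj2 Hphi e)) hpe.
    by rewrite H1 H2 Hk' // mulrzA -(proj1 (Hmu he) hpe).
  have hpv : is_vertex (phi e) by rewrite /is_vertex -(negbK (_ == _)).
  have [H1 H2] := (proj2 (proj2 Hphi e)) hpv.
  by rewrite H1 H2 subrr (proj2 (Hmu he) hpv) mul0r mulr0z.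
move=> v; apply: esym; rewrite (partition_big phi xpredT) //=.
transitivity (\sum_(e' : gX T) mult_at phi mu (val v) e' * k' e').
  apply: eq_bigr => e' _; rewrite /mult_at big_distrl /=.
  by apply: eq_bigr => e /andP [_ /eqP ->].
rewrite HDT mulr_sumr [RHS]big_mkcond /=; apply: eq_bigr => e' _.
rewrite mult_atE ?(valP v) //; case: ifP => _; by rewrite ?mul0r.
Qed.
End Pull.

Section Tree.
Variables (M : nmodType) (T : mgraph M).
Local Notation X := (gX T).
Local Notation r := (gr T).
Local Notation i := (gi T).
Hypothesis Hax : graph_axioms T.
Hypothesis Hnoc : forall s : seq X, ~~ graph_cycle s.
Variable e0 : X.
Hypothesis he0 : is_half_edge e0.

Definition cond (x y h : X) : bool :=
  [&& is_half_edge h, r h == x, r (i h) == y, h != e0 & h != i e0].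
Definition adjE (x y : X) : bool := [exists h, cond x y h].
Definition hsel (x y : X) : X := odflt e0 [pick h | cond x y h].

Lemma hselP x y : adjE x y -> cond x y (hsel x y).
Proof.
move=> /existsP [h hc]; rewrite /hsel; case: pickP => [h' -> //|/(_ h)].
by rewrite hc.
Qed.

Lemma no_path : ~~ connect adjE (r e0) (r (i e0)).
Proof.
apply/negP => /connectP [p pth lst].
move: lst; case: (shortenP pth) => p1 pth1 uq _ lst.
set vs := r e0 :: p1 in uq.
set k := size p1.
have szvs : size vs = k.+1 by [].
have stp : forall j, (j < k)%N -> adjE (nth e0 vs j) (nth e0 vs j.+1).
  by move=> j hj; move/pathP: pth1 => /(_ e0 j hj).
have lastv : nth e0 vs k = r (i e0) by rewrite lst (last_nth e0).
set hs := [seq hsel (nth e0 vs j) (nth e0 vs j.+1) | j <- iota 0 k].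
set s := rcons hs (i e0).
have szs : size s = k.+1 by rewrite size_rcons size_map size_iota.
have Ns : forall j, (j < k)%N -> nth e0 s j = hsel (nth e0 vs j) (nth e0 vs j.+1).
  move=> j hj; rewrite nth_rcons size_map size_iota hj.
  by rewrite (nth_map 0%N) ?size_iota // nth_iota.
have Nk : nth e0 s k = i e0 by rewrite nth_rcons size_map size_iota ltnn eqxx.
have C : forall j, (j < k)%N -> cond (nth e0 vs j) (nth e0 vs j.+1) (nth e0 s j).
  by move=> j hj; rewrite Ns //; apply: hselP; apply: stp.
have RS : forall j, (j < k.+1)%N -> r (nth e0 s j) = nth e0 vs j.
  move=> j; move=> hj0; have [->|hj] : j = k \/ (j < k)%N by lia.
  by rewrite Nk.
  by case/and5P: (C j hj) => _ /eqP.
have RIS : forall j, (j < k)%N -> r (i (nth e0 s j)) = nth e0 vs j.+1.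
  by move=> j hj; case/and5P: (C j hj) => _ _ /eqP.
have mrs : map r s = vs.
  apply: (@eq_from_nth _ e0); first by rewrite size_map szs.
  by move=> j; rewrite size_map szs => hj; rewrite (nth_map e0) ?szs // RS.
have ii' := ii Hax.
have vinj : forall a b, (a < k.+1)%N -> (b < k.+1)%N -> nth e0 vs a = nth e0 vs b -> a = b.
  by move=> a b ha hb /eqP; rewrite nth_uniq // => /eqP.
have hs_ne : forall j, (j < k)%N -> nth e0 s j != e0.
  by move=> j hj; case/and5P: (C j hj).
apply: (negP (Hnoc s)); apply/and5P; split.
- by rewrite szs.
- apply/(all_nthP e0) => j; rewrite szs ltnS leq_eqVlt => /orP [/eqP ->|hj].
    by rewrite Nk; apply: half_i.
  by case/and5P: (C j hj).
- by rewrite mrs.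
- have us : uniq s by apply: (map_uniq (f := r)); rewrite mrs.
  rewrite cat_uniq us (map_inj_uniq (can_inj ii')) us andbT /=.
  apply/hasPn => x /mapP [y ys ->]; apply/negP => iys.
  case/(nthP e0): ys => l hl nl; case/(nthP e0): iys => j hj nj.
  rewrite szs in hl hj.
  have ab : nth e0 s l = i (nth e0 s j) by rewrite nl nj ii'.
  have [el|hl'] : l = k \/ (l < k)%N by lia.
    have [ej|hj'] : j = k \/ (j < k)%N by lia.
      by move: (half_ne_i Hax he0) ab; rewrite el ej Nk ii' => /eqP h /h.
    move: (hs_ne j hj') ab; rewrite el Nk => /eqP h /(can_inj ii') hh.
    by apply: h.
  have [ej|hj'] : j = k \/ (j < k)%N by lia.
    by move: (hs_ne l hl') ab; rewrite ej Nk ii' => /eqP h /h.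
  have h1 : j = l.+1.
    apply: vinj; try lia.
    by rewrite -RIS // -RS; [rewrite ab ii' | lia].
  have h2 : l = j.+1.
    apply: vinj; try lia.
    by rewrite -RIS // -RS; [rewrite ab | lia].
  lia.
- rewrite (cycle_path e0) last_rcons; apply/(pathP e0) => j; rewrite szs.
  case: j => [|j] hj /=.
    by rewrite ii' RS // /vs.
  by rewrite RIS // RS.
Qed.
End Tree.

Lemma sum_if1 (X : finType) (P : pred X) (a : X) :
  \sum_(e | P e) (if e == a then 1 else 0 : int) = if P a then 1 else 0.
Proof.
rewrite big_mkcond (bigD1 a) //= eqxx big1 ?addr0.
  by case: (P a).
by move=> x /negPf ->; case: (P x).
Qed.

Section Cut.
Variables (M : nmodType) (G : zmodType) (iota : M -> G) (T : mgraph M).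
Local Notation X := (gX T).
Local Notation r := (gr T).
Local Notation i := (gi T).
Local Notation l := (gl T).
Hypothesis Hax : graph_axioms T.
Hypothesis Hnoc : forall s : seq X, ~~ graph_cycle s.
Hypothesis Hmet : metrised T.
Variable e0 : X.
Hypothesis he0 : is_half_edge e0.

Definition cutf (x : X) : G := if connect (adjE e0) (r e0) x then iota (l e0) else 0.
Definition cutD : divisor T := fun w =>
  (if r e0 == val w then 1 else 0) - (if r (i e0) == val w then 1 else 0).

Lemma cut_Delta : is_Delta iota cutf cutD.
Proof.
have ii' := ii Hax.
have np := no_path Hax Hnoc he0.
exists (fun e => (if e == e0 then 1 else 0) - (if e == i e0 then 1 else 0)); split.
  move=> e he; rewrite /gp_quot /cutf.
  have ne : e0 != i e0 by rewrite eq_sym; apply: half_ne_i.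
  case: (eqVneq e e0) => [->|n1].
    rewrite connect0 (negPf np) (negPf ne) subr0 subr0.
    by rewrite mulr1z.
  case: (eqVneq e (i e0)) => [->|n2].
    rewrite ii' connect0 (negPf np) sub0r sub0r.
    by case: Hmet => -> _; rewrite mulrN1z.
  have a1 : adjE e0 (r e) (r (i e)).
    by apply/existsP; exists e; rewrite /cond he !eqxx n1 n2.
  have a2 : adjE e0 (r (i e)) (r e).
    apply/existsP; exists (i e); rewrite /cond half_i // ii' !eqxx /=.
    apply/andP; split; apply/eqP => h.
      by move/eqP: n2; apply; rewrite -h ii'.
    by move/eqP: n1; apply; apply: (can_inj ii').
  have -> : connect (adjE e0) (r e0) (r e) = connect (adjE e0) (r e0) (r (i e)).
    apply/idP/idP => h; apply: connect_trans h _; exact: connect1.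
  by rewrite subr0 subrr mulr0z.
move=> w; rewrite big_split /= sumrN !sum_if1 half_i // he0 /=.
by [].
Qed.
End Cut.

Lemma max_exists (P : int -> Prop) (B k0 : int) :
  P k0 -> (forall k, P k -> k <= B) ->
  exists rk, (P rk /\ forall k, P k -> k <= rk) /\ k0 <= rk.
Proof.
move=> Pk0 HB.
suff H : forall N : nat, forall k, P k -> B - k <= N%:Z ->
  exists rk, (P rk /\ forall k', P k' -> k' <= rk) /\ k <= rk.
  apply: (H `|B - k0|%N k0 Pk0); have := HB _ Pk0; lia.
elim=> [|N IH] k Pk hN.
  exists k; split => // ; split => // k' Pk'; have := HB _ Pk'; lia.
case: (classic (exists k', P k' /\ k < k')) => [[k' [Pk' lt]]|nex].
  have [rk [[Prk Hrk] le]] := IH k' Pk' ltac:(have := HB _ Pk'; lia).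
  exists rk; split => //; lia.
exists k; split => //; split => // k' Pk'.
case: (lerP k' k) => // lt; exfalso; apply: nex; by exists k'.
Qed.

Section Main.
Variables (M : nmodType) (G : zmodType) (iota : M -> G).
Hypothesis HMsharp : sharp_monoid M.
Hypothesis Hgp : groupification iota.
Variables (Gam : mgraph M) (T : mgraph M).
Hypothesis HGam : is_mgraph Gam.
Hypothesis HT : is_mtree T.
Variables (phi : gX Gam -> gX T) (mu m : gX Gam -> int).
Hypothesis Hphi : is_morphism iota phi.
Hypothesis Hmu : is_slope iota phi mu.
Hypothesis Hharm : harmonic phi mu m.
Hypothesis Hnd : nondegen_mult m.

Definition Dpt (a : gX T) : divisor Gam :=
  fun w => if phi (val w) == a then m (val w) else 0.

Lemma Delta_ext (X : mgraph M) (g : gX X -> G) (D D' : divisor X) :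
  is_Delta iota g D -> (forall v, D v = D' v) -> is_Delta iota g D'.
Proof. by case=> k [Hk HD] H; exists k; split => // v; rewrite -H. Qed.

Lemma TaxT : graph_axioms T. Proof. by case: HT => [[]]. Qed.

Lemma step_edge e0 : is_half_edge e0 ->
  lin_equiv iota (Dpt (gr T e0)) (Dpt (gr T (gi T e0))).
Proof.
move=> he0; case: HT => [[HaxT _ HmetT] Hnoc].
have HD := pullback Hphi Hmu Hharm (cut_Delta iota HaxT Hnoc HmetT he0).
exists (fun x => cutf iota e0 (phi x)); split; first exact: Delta_PL HD.
apply: (Delta_ext HD) => w; rewrite /cutD /div_sub /Dpt /= !(eq_sym (phi _)).
by case: (_ == phi _); case: (_ == phi _); rewrite ?mulrBr ?mulr1 ?mulr0 ?subr0 ?sub0r ?subrr.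
Qed.

Lemma step_incid x y : incid x y -> lin_equiv iota (Dpt (gr T x)) (Dpt (gr T y)).
Proof.
have HaxT := TaxT.
case/or3P => /eqP ->.
- by rewrite (rr HaxT); apply: lin_equiv_refl.
- by rewrite (rr HaxT); apply: lin_equiv_refl.
- case: (boolP (is_half_edge x)) => hx; first exact: step_edge.
  rewrite vert_i //; first exact: lin_equiv_refl.
  by rewrite /is_vertex -(negbK (_ == _)).
Qed.

Lemma chain p y0 : path (@incid M T) y0 p ->
  lin_equiv iota (Dpt (gr T y0)) (Dpt (gr T (last y0 p))).
Proof.
elim: p y0 => [|y p IH] y0 /=; first by move=> _; apply: lin_equiv_refl.
case/andP => h1 h2; apply: lin_equiv_trans (step_incid h1) (IH _ h2).
Qed.

Lemma equiv_all a b : is_vertex a -> is_vertex b -> lin_equiv iota (Dpt a) (Dpt b).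
Proof.
move=> ha hb; case: HT => [[HaxT [_ Hc] _] _].
case/connectP: (Hc a b) => p pth lst.
have := chain pth; rewrite -lst.
by move: ha hb; rewrite /is_vertex => /eqP -> /eqP ->.
Qed.

Lemma Dpt_ge0 a w : 0 <= Dpt a w.
Proof.
rewrite /Dpt; case: ifP => // _; apply: ltW; apply: Hnd; exact: (valP w).
Qed.

Lemma deg_ge0 (D : divisor Gam) : effective D -> 0 <= deg D.
Proof. by move=> H; apply: sumr_ge0 => w _; apply: H. Qed.

Lemma deg_sub (D1 D2 : divisor Gam) : deg (div_sub D1 D2) = deg D1 - deg D2.
Proof. by rewrite /deg /div_sub sumrB. Qed.

Lemma rank_ub a k : rank_cond iota (Dpt a) k -> k <= deg (Dpt a).
Proof.
move=> Hr; case: (lerP k (deg (Dpt a))) => // lt; exfalso.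
case: HGam => [HaxG [[x0 hx0] _] HmetG].
set w0 : vtx Gam := exist _ x0 hx0.
have hD0 : 0 <= deg (Dpt a) by apply: deg_ge0 => w; apply: Dpt_ge0.
pose F : divisor Gam := fun w => if w == w0 then k else 0.
have Feff : effective F by move=> w; rewrite /F; case: ifP => _ //; lia.
have Fdeg : deg F = k.
  rewrite /deg (bigD1 w0) //= /F eqxx big1 ?addr0 // => w /negPf -> //.
have [E [Eeff [g [_ HD]]]] := Hr F Feff Fdeg.
have := deg_Delta HaxG HmetG HMsharp Hgp HD.
rewrite !deg_sub Fdeg; have := deg_ge0 Eeff; lia.
Qed.

Lemma rank1 a : is_vertex a -> rank_cond iota (Dpt a) 1.
Proof.
move=> ha F Feff Fdeg.
have [w hw] : exists w, F w != 0.
  case: (classic (exists w, F w != 0)) => // hn; exfalso.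
  have : deg F = 0.
    rewrite /deg big1 // => w _; case: (eqVneq (F w) 0) => // h.
    by exfalso; apply: hn; exists w.
  by rewrite Fdeg.
have Fw1 : F w = 1.
  have := Fdeg; rewrite /deg (bigD1 w) //= => h3.
  have h2 : 0 <= \sum_(i | i != w) F i by apply: sumr_ge0 => *; apply: Feff.
  move/eqP: hw => h1; have h0 := Feff w.
  move: h0 h1 h2 h3; move: (F w) (\sum_(i | i != w) F i) => x y; lia.
have Fo : forall w', w' != w -> F w' = 0.
  move=> w' hw'; have := Fdeg; rewrite /deg (bigD1 w) //= Fw1 => h.
  have h0 : \sum_(i | i != w) F i = 0.
    by move: h; move: (\sum_(i | i != w) F i) => y; lia.
  exact: (psumr_eq0P (fun i _ => Feff i) h0).
pose E : divisor Gam := fun w' => Dpt (phi (val w)) w' - F w'.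
exists E; split.
  move=> w'; rewrite /E; case: (eqVneq w' w) => [->|hw'].
    rewrite Fw1 /Dpt eqxx subr_ge0; apply: Hnd; exact: (valP w).
  by rewrite Fo // subr0; apply: Dpt_ge0.
apply: (lin_equiv_ext (D1 := Dpt (phi (val w))) (D2 := Dpt a)).
  move=> v; rewrite /E /div_sub; lia.
by apply: equiv_all => //; apply: (proj1 Hphi); exact: (valP w).
Qed.

End Main.

Unset Implicit Arguments.

Theorem theorem3p1 (M : nmodType) (G : zmodType) (iota : M -> G)
  (HMsharp : sharp_monoid M) (HMint : integral_monoid M)
  (Hgp : groupification iota)
  (Gam : mgraph M) (HGam : is_mgraph Gam)
  (T : mgraph M) (HT : is_mtree T)
  (phi : gX Gam -> gX T) (mu m : gX Gam -> int) (n : int)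
  (Hphi : is_morphism iota phi) (Hmu : is_slope iota phi mu)
  (Hharm : harmonic phi mu m) (Hnd : nondegen_mult m)
  (Hdeg : has_degree phi mu n) :
  dgon_le Gam iota n.
Proof.
case: Hdeg => [[e1 he1] Hsum].
have HaxT : graph_axioms T by case: HT => [[]].
set v0 := gr T e1.
have hv0 : is_vertex v0 by apply: vert_r.
exists (Dpt phi m v0); split.
  have R1 : rank_cond iota (Dpt phi m v0) 1.
    by apply: rank1; eassumption.
  have RU : forall k, rank_cond iota (Dpt phi m v0) k -> k <= deg (Dpt phi m v0).
    by move=> k; apply: rank_ub; eassumption.
  have [rk [[H1 H2] H3]] := max_exists R1 RU.
  by exists rk; split.
suff -> : deg (Dpt phi m v0) = n by rewrite lexx.
rewrite -(Hsum e1 he1) /deg /Dpt.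
rewrite (sum_vtx (fun x => if phi x == v0 then m x else 0)) -big_mkcondr.
apply: eq_bigr => v /andP [hv /eqP pv].
by rewrite (mult_atE Hphi Hmu Hharm) // he1 pv eqxx.
Qed.
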